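(* Let $n>1$, let $q$ be an odd prime power, and let $\xi$ be a generator of ${\rm GF}(q)^\times$. Then ${\rm Sp}(2n,q)$ is generated by $\hat h_1(\xi)=\mathrm{diag}(\xi,1,\dots,1,\xi^{-1})$ and $\hat x_{12}(1)\,\hat w$, where $\hat x_{12}(1)=(I+E_{12})(I-E_{2n-1,2n})$ and $\hat w$ is the $2n\times 2n$ matrix whose nonzero entries are: $1$ in positions $(i+1,i)$ for $1\le i\le n-1$; $-1$ in position $(2n,n)$; $1$ in positions $(j-1,j)$ for $n+2\le j\le 2n$; and $1$ in position $(1,n+1)$. (For $n=2$ the generators are $\mathrm{diag}(\xi,1,1,\xi^{-1})$ and $\begin{pmatrix}1&0&1&0\\1&0&0&0\\0&1&0&1\\0&-1&0&0\end{pmatrix}$.)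
   Context: ${\rm Sp}(2n,q)$ is the group of $2n\times 2n$ matrices $X$ over ${\rm GF}(q)$ with $X^tJX=J$, where $J=\sum_{i=1}^n\big(E_{i,2n+1-i}-E_{2n+1-i,i}\big)$. $E_{ij}$ is the matrix unit with $1$ in position $(i,j)$. For $1\le i\le n$ put $i'=2n+1-i$; $\hat h_i(\alpha)=h_i(\alpha)h_{i'}(\alpha^{-1})$ with $h_k(\alpha)$ the identity with $k$-th diagonal entry replaced by $\alpha$, and $\hat x_{ij}(\alpha)=x_{ij}(\alpha)x_{j'i'}(-\alpha)$ with $x_{ij}(\alpha)=I+\alpha E_{ij}$. The matrix $\hat w$ is the permutation matrix (entry $(\sigma(j),j)$ equal to $1$) of the $2n$-cycle $\sigma=(1,2,\dots,n,1',2',\dots,n')$ with its $(2n,n)$ entry replaced by $-1$. *)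

(* Defs.v *)
(* Matrices over a finite field F, of size 2n = n.*2.
   Indices are 0-based here: the paper's (1-based) row/column k is our k-1. *)
From HB Require Import structures.
From mathcomp Require Import all_boot all_order all_algebra all_fingroup all_field.
Set Implicit Arguments. Unset Strict Implicit. Unset Printing Implicit Defensive.
Import GRing.Theory.
Local Open Scope ring_scope.

Section SpDefs.
Variable F : fieldType.
Variable n : nat.
Local Notation N := (n.*2).

(* matrix unit E_{a+1,b+1} (0-based indices a b) *)
Definition Emx (a b : nat) : 'M[F]_N :=
  \matrix_(i < N, j < N) ((nat_of_ord i == a) && (nat_of_ord j == b))%:R.

Definition Jmx : 'M[F]_N := \sum_(i < n) (Emx i (N.-1 - i) - Emx (N.-1 - i) i).

Definition inSp (X : 'M[F]_N) : Prop := X^T *m Jmx *m X = Jmx.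

(* hat h_1(xi) = h_1(xi) h_{1'}(xi^-1) = diag(xi,1,...,1,xi^-1) *)
Definition hmx (k : nat) (a : F) : 'M[F]_N := 1%:M + (a - 1) *: Emx k k.
Definition hat_h1 (xi : F) : 'M[F]_N := hmx 0 xi *m hmx N.-1 xi^-1.

Definition hat_x12_1 : 'M[F]_N := (1%:M + Emx 0 1) *m (1%:M - Emx (N.-2) (N.-1)).

Definition hat_w : 'M[F]_N :=
  \matrix_(i < N, j < N)
    (if ((j : nat) <= n - 2)%N && ((i : nat) == j.+1) then 1
     else if ((i : nat) == N.-1) && ((j : nat) == n.-1) then -1
     else if (n.+1 <= j)%N && ((j : nat) <= N.-1)%N && ((i : nat) == j.-1) then 1
     else if ((i : nat) == 0%N) && ((j : nat) == n) then 1
     else 0).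

End SpDefs.

Inductive gen_by (F : fieldType) (m : nat) (S : 'M[F]_m -> Prop) : 'M[F]_m -> Prop :=
| gen_base X : S X -> gen_by S X
| gen_one : gen_by S 1%:M
| gen_mul X Y : gen_by S X -> gen_by S Y -> gen_by S (X *m Y)
| gen_inv X : gen_by S X -> gen_by S (invmx X).

(* Main.v *)
Require Import Defs.
From HB Require Import structures.
From mathcomp Require Import all_boot all_order all_algebra all_fingroup all_field.
From mathcomp Require Import zify ring lra.
Set Implicit Arguments. Unset Strict Implicit. Unset Printing Implicit Defensive.
Import GRing.Theory.
Local Open Scope ring_scope.
Lemma sum_pick (F : fieldType) (m a : nat) (P : nat -> bool) :
  \sum_(k < m) (((a == k) && P k)%:R : F) = ((a < m)%N && P a)%:R.
Proof.
elim: m => [|m IH]; first by rewrite big_ord0 ltn0.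
rewrite big_ord_recr /= IH.
case: (ltngtP a m) => am.
- have -> : (a < m.+1)%N by lia.
  by rewrite addr0.
- have -> : (a < m.+1)%N = false by lia.
  by rewrite addr0.
- by rewrite am ltnSn add0r.
Qed.

Section Aux.
Variable F : fieldType.
Variable n : nat.
Local Notation N := (n.*2).
Local Notation J := (Jmx F n).

Lemma J_entry (i j : 'I_N) : J i j =
  if ((i : nat) + j == N.-1)%N then (if (i < n)%N then 1 else -1) else 0.
Proof.
rewrite /Jmx summxE.
under eq_bigr => k _ do rewrite !mxE.
rewrite sumrB (sum_pick _ _ _ (fun k => (j : nat) == N.-1 - k)%N).
under eq_bigr => k _ do rewrite andbC.
rewrite (sum_pick _ _ _ (fun k => (i:nat) == N.-1 - k)%N).
have hi := ltn_ord i; have hj := ltn_ord j.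
case: ifP => /eqP E.
  case: ifP => lt.
    have -> : ((j:nat) == N.-1 - i)%N by apply/eqP; lia.
    have -> : (j < n)%N = false by lia.
    by rewrite /= subr0.
  have -> : (j < n)%N by lia.
  have -> : ((i:nat) == N.-1 - j)%N by apply/eqP; lia.
  by rewrite /= sub0r.
have -> : ((j:nat) == N.-1 - i)%N = false by apply/negbTE/eqP; lia.
have -> : ((i:nat) == N.-1 - j)%N = false by apply/negbTE/eqP; lia.
by rewrite !andbF subr0.
Qed.

Hypothesis n2 : (1 < n)%N.
Lemma N_gt0 : (0 < N)%N. Proof. lia. Qed.
Definition io (k : nat) : 'I_N := insubd (Ordinal N_gt0) k.
Lemma ioK k : (k < N)%N -> (io k : nat) = k.
Proof. by move=> kN; rewrite /io val_insubd kN. Qed.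
Lemma io_val (i : 'I_N) : io i = i.
Proof. by apply: val_inj; rewrite /= ioK. Qed.

Definition ev (k : nat) : 'cV[F]_N := \col_(i < N) ((i : nat) == k)%:R.
Definition om (x y : 'cV[F]_N) : F := (x^T *m J *m y) 0 0.
Definition sg (k : nat) : F := if (n <= k)%N then 1 else -1.

Lemma ev_entry k i j : ev k i j = ((i : nat) == k)%:R.
Proof. by rewrite mxE. Qed.

Lemma mxev m (A : 'M[F]_(m, N)) k i j : (k < N)%N -> (A *m ev k) i j = A i (io k).
Proof.
move=> kN; rewrite mxE (bigD1 (io k)) //= big1 ?addr0.
  by rewrite ev_entry ioK // eqxx mulr1.
move=> l /negbTE lk; rewrite ev_entry.
have -> : ((l : nat) == k) = false.
  apply/negbTE; apply: contraFN lk => /eqP <-; by rewrite io_val.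
by rewrite mulr0.
Qed.

Lemma mx_ext m (A B : 'M[F]_(m, N)) :
  (forall k, (k < N)%N -> A *m ev k = B *m ev k) -> A = B.
Proof.
move=> H; apply/matrixP => i j.
have := H j (ltn_ord j) => /matrixP /(_ i 0).
by rewrite !mxev // io_val.
Qed.

Lemma J_ev k : (k < N)%N -> J *m ev k = sg k *: ev (N.-1 - k).
Proof.
move=> kN; apply/matrixP => i j; rewrite mxev // !mxE J_entry ioK //.
rewrite /sg.
have hi := ltn_ord i.
case: ifP => /eqP E.
  have -> : ((i : nat) == N.-1 - k)%N by apply/eqP; lia.
  case: ifP => a; case: ifP => b; rewrite ?mulr1 //; lia.
have -> : ((i : nat) == N.-1 - k)%N = false by apply/negbTE/eqP; lia.
by rewrite mulr0.
Qed.

Lemma trJ : J^T = - J.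
Proof.
apply/matrixP => i j; rewrite !mxE !J_entry addnC.
have hi := ltn_ord i; have hj := ltn_ord j.
case: ifP => /eqP E //; last by rewrite oppr0.
case: ifP => a; case: ifP => b; rewrite ?opprK //; lia.
Qed.

Lemma JJ : J *m J = - 1%:M.
Proof.
apply: mx_ext => k kN; rewrite -mulmxA J_ev // -scalemxAr J_ev; last lia.
rewrite scalerA mulNmx mul1mx.
have -> : (N.-1 - (N.-1 - k) = k)%N by lia.
rewrite /sg; case: ifP => a; case: ifP => b; try lia.
  by rewrite mulrN1 scaleN1r.
by rewrite mulN1r scaleN1r.
Qed.

Lemma J_unit : J \in unitmx.
Proof.
have /mulmx1_unit [] // : J *m (- J) = 1%:M by rewrite mulmxN JJ opprK.
Qed.

Lemma omE x y : om x y = (x^T *m J *m y) 0 0. Proof. by []. Qed.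

Lemma om_anti x y : om x y = - om y x.
Proof.
have E : (x^T *m J *m y)^T = - (y^T *m J *m x).
  by rewrite !trmx_mul trmxK trJ mulNmx mulmxN mulmxA.
rewrite /om.
transitivity (((x^T *m J *m y)^T) 0 0); first by rewrite [RHS]mxE.
by rewrite E mxE.
Qed.

Lemma omDr x y z : om x (y + z) = om x y + om x z.
Proof. by rewrite /om mulmxDr mxE. Qed.
Lemma omZr x c y : om x (c *: y) = c * om x y.
Proof. by rewrite /om -scalemxAr mxE. Qed.
Lemma omNr x y : om x (- y) = - om x y.
Proof. by rewrite -scaleN1r omZr mulN1r. Qed.
Lemma omDl x y z : om (x + y) z = om x z + om y z.
Proof. by rewrite om_anti omDr opprD -!om_anti. Qed.
Lemma omZl c x y : om (c *: x) y = c * om x y.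
Proof. by rewrite om_anti omZr -mulrN -om_anti. Qed.
Lemma omNl x y : om (- x) y = - om x y.
Proof. by rewrite -scaleN1r omZl mulN1r. Qed.
Lemma om0r x : om x 0 = 0.
Proof. by rewrite /om mulmx0 mxE. Qed.
Lemma om0l x : om 0 x = 0.
Proof. by rewrite om_anti om0r oppr0. Qed.

Lemma omev x k : (k < N)%N -> om x (ev k) = sg k * x (io (N.-1 - k)) 0.
Proof.
move=> kN; rewrite /om -mulmxA J_ev // -scalemxAr mxE mxE.
rewrite (bigD1 (io (N.-1 - k))) //= big1 ?addr0.
  rewrite mxE ev_entry ioK ?eqxx ?mulr1 ?mxE //; lia.
move=> l /negbTE lk; rewrite ev_entry.
have -> : ((l : nat) == N.-1 - k)%N = false.
  apply/negbTE; apply: contraFN lk => /eqP <-; by rewrite io_val.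
by rewrite mulr0.
Qed.

Lemma evom x k : (k < N)%N -> om (ev k) x = - sg k * x (io (N.-1 - k)) 0.
Proof. by move=> kN; rewrite om_anti omev // mulNr. Qed.

Lemma ev_ent_io k l : (k < N)%N -> (l < N)%N ->
  ev k (io l) 0 = (l == k)%:R.
Proof. by move=> kN lN; rewrite ev_entry ioK. Qed.

Hypothesis two_nz : (2 : F) != 0.

Lemma om_self x : om x x = 0.
Proof.
have := om_anti x x; move/eqP; rewrite -subr_eq0 opprK -mulr2n -mulr_natr.
by rewrite mulf_eq0 (negbTE two_nz) orbF => /eqP.
Qed.

Definition Qm (u w : 'cV[F]_N) (t : F) : 'M[F]_N :=
  1%:M + t *: (u *m (w^T *m J) + w *m (u^T *m J)).
Definition Tm (v : 'cV[F]_N) (a : F) : 'M[F]_N :=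
  1%:M + a *: (v *m (v^T *m J)).

Lemma rank1_act (u w x : 'cV[F]_N) : u *m (w^T *m J) *m x = om w x *: u.
Proof. by rewrite -mulmxA [w^T *m J *m x]mx11_scalar mul_mx_scalar. Qed.

Lemma Qm_act u w t x :
  Qm u w t *m x = x + (t * om w x) *: u + (t * om u x) *: w.
Proof.
rewrite /Qm mulmxDl mul1mx -scalemxAl mulmxDl !rank1_act scalerDr !scalerA addrA.
by [].
Qed.

Lemma Tm_act v a x : Tm v a *m x = x + (a * om v x) *: v.
Proof. by rewrite /Tm mulmxDl mul1mx -scalemxAl rank1_act scalerA. Qed.


Lemma entry_ev (M : 'M[F]_N) a b : (a < N)%N -> (b < N)%N ->
  ((ev a)^T *m M *m ev b) 0 0 = M (io a) (io b).
Proof.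
move=> aN bN; rewrite mxev // mxE (bigD1 (io a)) //= big1 ?addr0.
  by rewrite !mxE ioK // eqxx mul1r.
move=> l /negbTE la; rewrite !mxE.
have -> : ((l : nat) == a) = false.
  apply/negbTE; apply: contraFN la => /eqP <-; by rewrite io_val.
by rewrite mul0r.
Qed.

Lemma omM (X : 'M[F]_N) x y :
  om (X *m x) (X *m y) = (x^T *m (X^T *m J *m X) *m y) 0 0.
Proof. by rewrite /om trmx_mul !mulmxA. Qed.

Lemma inSpP (X : 'M[F]_N) :
  inSp X <-> (forall x y, om (X *m x) (X *m y) = om x y).
Proof.
split=> [H x y|H]; first by rewrite omM H.
apply/matrixP => i j.
have := H (ev i) (ev j); rewrite omM /om !entry_ev // !io_val.
by [].
Qed.

Lemma sp_om (X : 'M[F]_N) x y : inSp X -> om (X *m x) (X *m y) = om x y.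
Proof. by move/inSpP. Qed.

Lemma sp_one : inSp (1%:M : 'M[F]_N).
Proof. by apply/inSpP => x y; rewrite !mul1mx. Qed.

Lemma sp_mul (X Y : 'M[F]_N) : inSp X -> inSp Y -> inSp (X *m Y).
Proof.
move=> hX hY; apply/inSpP => x y.
by rewrite -!mulmxA (sp_om _ _ hX) (sp_om _ _ hY).
Qed.

Lemma sp_unit (X : 'M[F]_N) : inSp X -> X \in unitmx.
Proof.
move=> hX.
have E : (- J *m X^T *m J) *m X = 1%:M.
  by rewrite -!mulmxA (mulmxA X^T) hX mulNmx JJ opprK.
by case: (mulmx1_unit E).
Qed.

Lemma sp_inv (X : 'M[F]_N) : inSp X -> inSp (invmx X).
Proof.
move=> hX; apply/inSpP => x y.
rewrite -(sp_om _ _ hX) !mulmxA mulmxV ?sp_unit // !mul1mx //.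
Qed.

Definition omE2 := (omDl, omDr, omZl, omZr, omNl, omNr, om0l, om0r).

Lemma Qm_sp u w t : om u w = 0 -> inSp (Qm u w t).
Proof.
move=> uw; apply/inSpP => x y; rewrite !Qm_act !omE2 !om_self.
have wu : om w u = 0 by rewrite om_anti uw oppr0.
rewrite uw wu (om_anti x u) (om_anti x w).
ring.
Qed.

Lemma Tm_sp v a : inSp (Tm v a).
Proof.
apply/inSpP => x y; rewrite !Tm_act !omE2 !om_self (om_anti x v).
ring.
Qed.

Lemma Qm_conj (g : 'M[F]_N) u w t : inSp g -> g *m Qm u w t = Qm (g *m u) (g *m w) t *m g.
Proof.
move=> hg; apply: mx_ext => k _.
rewrite -!mulmxA !Qm_act !mulmxDr -!scalemxAr !(sp_om _ _ hg) //.
Qed.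

Lemma Tm_conj (g : 'M[F]_N) v a : inSp g -> g *m Tm v a = Tm (g *m v) a *m g.
Proof.
move=> hg; apply: mx_ext => k _.
by rewrite -!mulmxA !Tm_act !mulmxDr -!scalemxAr !(sp_om _ _ hg).
Qed.

Lemma Qm_sym u w t : Qm u w t = Qm w u t.
Proof. by rewrite /Qm [u *m _ + _]addrC. Qed.
Lemma Qm_scalel c u w t : Qm (c *: u) w t = Qm u w (c * t).
Proof.
apply: mx_ext => k _; rewrite !Qm_act !omE2.
apply/matrixP => i j; rewrite !mxE; ring.
Qed.

Lemma Qm_scaler c u w t : Qm u (c *: w) t = Qm u w (c * t).
Proof. by rewrite Qm_sym Qm_scalel Qm_sym. Qed.

Lemma Qm_add u w s t : om u w = 0 -> Qm u w s *m Qm u w t = Qm u w (s + t).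
Proof.
move=> uw; have wu : om w u = 0 by rewrite om_anti uw oppr0.
apply: mx_ext => k _; rewrite -mulmxA !Qm_act !omE2 !om_self ?uw ?wu.
apply/matrixP => i j; rewrite !mxE; ring.
Qed.

Lemma Qm0 u w : Qm u w 0 = 1%:M.
Proof. by rewrite /Qm scale0r addr0. Qed.

Lemma Qm_addw u w w' t : om u w = 0 -> om u w' = 0 -> om w w' = 0 ->
  Qm u (w + w') t = Qm u w t *m Qm u w' t.
Proof.
move=> uw uw' ww'; have wu : om w u = 0 by rewrite om_anti uw oppr0.
have w'u : om w' u = 0 by rewrite om_anti uw' oppr0.
have w'w : om w' w = 0 by rewrite om_anti ww' oppr0.
apply: mx_ext => k _; rewrite -mulmxA !Qm_act !omE2 !om_self ?uw ?wu ?uw' ?w'u ?ww' ?w'w.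
apply/matrixP => i j; rewrite !mxE; ring.
Qed.

Lemma Qm_comm u w w' s t : om u w = 0 -> om u w' = 0 ->
  Tm u (2 * s * t * om w w') =
  Qm u w (- s) *m Qm u w' (- t) *m Qm u w s *m Qm u w' t.
Proof.
move=> uw uw'; have wu : om w u = 0 by rewrite om_anti uw oppr0.
have w'u : om w' u = 0 by rewrite om_anti uw' oppr0.
have w'w : om w' w = - om w w' by rewrite om_anti.
apply: mx_ext => k _; rewrite -!mulmxA Tm_act !Qm_act !omE2 !om_self ?uw ?wu ?uw' ?w'u ?w'w.
apply/matrixP => i j; rewrite !mxE; ring.
Qed.

Lemma Tm0 v : Tm v 0 = 1%:M.
Proof. by rewrite /Tm scale0r addr0. Qed.

Lemma Tm_add v a b : Tm v a *m Tm v b = Tm v (a + b).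
Proof.
apply: mx_ext => k _; rewrite -mulmxA !Tm_act !omE2 !om_self.
apply/matrixP => i j; rewrite !mxE; ring.
Qed.

Lemma Tm_neg v a : Tm (- v) a = Tm v a.
Proof.
apply: mx_ext => k _; rewrite !Tm_act !omE2.
apply/matrixP => i j; rewrite !mxE; ring.
Qed.

Lemma Tm_scale c v a : Tm (c *: v) a = Tm v (c * c * a).
Proof.
apply: mx_ext => k _; rewrite !Tm_act !omE2.
apply/matrixP => i j; rewrite !mxE; ring.
Qed.


Lemma Emx_ev a b i : (i < N)%N -> Emx F n a b *m ev i = (i == b)%:R *: ev a.
Proof.
move=> iN; apply/matrixP => r c; rewrite mxev // !mxE ioK //.
by case: (r == a :> nat); case: (i == b); rewrite ?mulr1 ?mulr0 ?mul0r.
Qed.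

Lemma hmx_ev k a i : (i < N)%N -> hmx n k a *m ev i = (if i == k then a else 1) *: ev i.
Proof.
move=> iN; rewrite /hmx mulmxDl mul1mx -scalemxAl Emx_ev //.
case: eqP => [->|_]; last by rewrite scale0r scaler0 addr0 scale1r.
by rewrite scale1r -[X in X + _]scale1r -scalerDl addrC subrK.
Qed.

Definition lam (xi : F) (i : nat) : F :=
  if i == 0%N then xi else if i == N.-1 then xi^-1 else 1.

Lemma h_ev (xi : F) i : (i < N)%N -> hat_h1 n xi *m ev i = lam xi i *: ev i.
Proof.
move=> iN; rewrite /hat_h1 -mulmxA hmx_ev // -scalemxAr hmx_ev // scalerA /lam.
case: eqP => [->|i0]; last by rewrite mul1r.
by rewrite (_ : (N.-1 == 0%N) = false) ?mulr1 //; lia.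
Qed.

Lemma om_ee a b : (a < N)%N -> (b < N)%N ->
  om (ev a) (ev b) = if (a + b == N.-1)%N then (if (a < n)%N then 1 else -1) else 0.
Proof.
move=> aN bN; rewrite /om entry_ev // J_entry !ioK //.
Qed.

Lemma inSp_basis (X : 'M[F]_N) :
  (forall a b, (a < N)%N -> (b < N)%N -> om (X *m ev a) (X *m ev b) = om (ev a) (ev b)) ->
  inSp X.
Proof.
move=> H; apply/matrixP => i j.
have := H i j (ltn_ord i) (ltn_ord j); rewrite omM /om !entry_ev // !io_val.
by [].
Qed.

Lemma h_sp (xi : F) : xi != 0 -> inSp (hat_h1 n xi).
Proof.
move=> xi0; apply: inSp_basis => a b aN bN.
rewrite !h_ev // omZl omZr !om_ee //.
case: ifP => /eqP E; last by rewrite !mulr0.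
rewrite /lam.
have [a0|a0] := eqVneq a 0%N; have [b0|b0] := eqVneq b 0%N;
  have [aL|aL] := eqVneq a N.-1; have [bL|bL] := eqVneq b N.-1; try lia;
  rewrite ?mul1r //.
- by rewrite mulrA mulfV // mul1r.
- by rewrite mulrA mulVf // mul1r.
Qed.

Definition wsig (k : nat) : nat :=
  if (k < n.-1)%N then k.+1 else if k == n.-1 then N.-1 else if k == n then 0%N else k.-1.
Definition wsgn (k : nat) : F := if k == n.-1 then -1 else 1.

Lemma wsig_lt k : (k < N)%N -> (wsig k < N)%N.
Proof. rewrite /wsig; move=> kN; repeat case: ifP => ?; lia. Qed.

Lemma w_ev k : (k < N)%N -> hat_w F n *m ev k = wsgn k *: ev (wsig k).
Proof.
move=> kN; apply/matrixP => i j; rewrite mxev // !mxE ioK // /wsgn /wsig.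
have hi := ltn_ord i.
move: (nat_of_ord i) hi => ii hi.
repeat match goal with
  | |- context [if ?c then _ else _] => case: (boolP c) => /= ?
  | |- context [nat_of_bool ?c] => case: (boolP c) => /= ?
  end; try (exfalso; lia);
  by rewrite ?mulr1 ?mul1r ?mulN1r ?mulr0 ?oppr0.
Qed.


Ltac bash := repeat match goal with
  | |- context [if ?c then _ else _] => case: (boolP c) => /= ?
  | |- context [nat_of_bool ?c] => case: (boolP c) => /= ?
  | H : context [if ?c then _ else _] |- _ => move: H; case: (boolP c) => /= ? ?
  end; try (exfalso; lia).

Lemma w_sp : inSp (hat_w F n).
Proof.
apply: inSp_basis => a b aN bN.
rewrite !w_ev // omZl omZr !om_ee ?wsig_lt // /wsig /wsgn.
bash; ring.
Qed.

Definition Xm (t : F) : 'M[F]_N := Qm (ev 0) (- ev (N.-2)) t.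

Lemma x12_Xm : hat_x12_1 F n = Xm 1.
Proof.
apply: mx_ext => k kN.
rewrite /Xm Qm_act omNl !om_ee //; try lia.
rewrite /hat_x12_1 -mulmxA (mulmxDl 1%:M (Emx F n 0 1)) mul1mx.
rewrite (mulmxBl 1%:M) mul1mx Emx_ev // mulmxBr -scalemxAr !Emx_ev //; try lia.
apply/matrixP => i j; rewrite !mxE.
move: (nat_of_ord i) => ii.
bash; ring.
Qed.

Lemma Xm_sp t : inSp (Xm t).
Proof.
apply: Qm_sp; rewrite omNr om_ee //; try lia.
by bash; rewrite oppr0.
Qed.

Lemma x12_sp : inSp (hat_x12_1 F n).
Proof. by rewrite x12_Xm; apply: Xm_sp. Qed.

Definition wp (k : nat) : 'M[F]_N := iter k (mulmx (hat_w F n)) 1%:M.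

Lemma wpS k : wp k.+1 = hat_w F n *m wp k. Proof. by []. Qed.

Lemma wp_sp k : inSp (wp k).
Proof. elim: k => [|k IH]; [exact: sp_one | rewrite wpS; exact: sp_mul w_sp IH]. Qed.

Lemma wp_e0 k : (k <= n.-1)%N -> wp k *m ev 0 = ev k.
Proof.
elim: k => [|k IH] kn; first by rewrite mul1mx.
rewrite wpS -mulmxA IH; last lia.
rewrite w_ev; last lia.
rewrite /wsgn /wsig.
have -> : (k == n.-1)%N = false by apply/negbTE/eqP; lia.
by rewrite (_ : (k < n.-1)%N) ?scale1r //; lia.
Qed.

Lemma wp_eN2 k : (k <= n.-2)%N -> wp k *m ev (N.-2) = ev (N.-2 - k).
Proof.
elim: k => [|k IH] kn; first by rewrite mul1mx subn0.
rewrite wpS -mulmxA IH; last lia.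
rewrite w_ev; last lia.
rewrite /wsgn /wsig.
have -> : (N.-2 - k == n.-1)%N = false by apply/negbTE/eqP; lia.
rewrite (_ : (N.-2 - k < n.-1)%N = false); last lia.
rewrite (_ : (N.-2 - k == n)%N = false); last by apply/negbTE/eqP; lia.
by rewrite scale1r; congr ev; lia.
Qed.

Lemma wp_last : wp n.-1 *m ev (N.-2) = ev 0.
Proof.
have -> : n.-1 = (n.-2).+1 by lia.
rewrite wpS -mulmxA wp_eN2 // w_ev; last lia.
rewrite /wsgn /wsig.
have -> : (N.-2 - n.-2 == n.-1)%N = false by apply/negbTE/eqP; lia.
rewrite (_ : (N.-2 - n.-2 < n.-1)%N = false); last lia.
rewrite (_ : (N.-2 - n.-2 == n)%N); last by apply/eqP; lia.
by rewrite scale1r.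
Qed.

Lemma wp_hi m : (m <= n.-1)%N -> wp (n + m) *m ev 0 = - ev (N.-1 - m).
Proof.
elim: m => [|m IH] mn.
  have -> : (n + 0 = (n.-1).+1)%N by lia.
  rewrite wpS -mulmxA wp_e0 // w_ev; last lia.
  rewrite /wsgn /wsig eqxx ltnn subn0 scaleN1r //.
rewrite addnS wpS -mulmxA IH; last lia.
rewrite mulmxN w_ev; last lia.
rewrite /wsgn /wsig.
have -> : (N.-1 - m == n.-1)%N = false by apply/negbTE/eqP; lia.
rewrite (_ : (N.-1 - m < n.-1)%N = false); last lia.
rewrite (_ : (N.-1 - m == n)%N = false); last by apply/negbTE/eqP; lia.
by rewrite scale1r; congr (- ev _); lia.
Qed.


Variable xi : F.
Hypotheses (xi0 : xi != 0) (xi1 : xi != 1)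
  (xigen : forall c : F, c != 0 -> exists k, c = xi ^+ k).

Definition Sgen := fun Y : 'M[F]_N => Y = hat_h1 n xi \/ Y = hat_x12_1 F n *m hat_w F n.
Local Notation gen := (gen_by Sgen).

Lemma gen_sp X : gen X -> inSp X.
Proof.
elim=> {X} [X [->|->]| |X Y _ hX _ hY|X _ hX].
- exact: h_sp.
- exact: sp_mul x12_sp w_sp.
- exact: sp_one.
- exact: sp_mul.
- exact: sp_inv.
Qed.

Lemma gen_unit X : gen X -> X \in unitmx.
Proof. by move/gen_sp/sp_unit. Qed.

Lemma gen_conj g Y : gen g -> gen Y -> gen (g *m Y *m invmx g).
Proof. by move=> hg hY; apply: gen_mul; [apply: gen_mul|apply: gen_inv]. Qed.

Lemma conj_eq (g A B : 'M[F]_N) : g \in unitmx -> g *m A = B *m g -> B = g *m A *m invmx g.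
Proof. by move=> u E; rewrite E -mulmxA mulmxV // mulmx1. Qed.

Lemma gen_Qconj g u w t : gen g -> gen (Qm u w t) -> gen (Qm (g *m u) (g *m w) t).
Proof.
move=> hg hQ; rewrite (conj_eq (gen_unit hg) (Qm_conj u w t (gen_sp hg))).
exact: gen_conj.
Qed.

Lemma gen_Tconj g v a : gen g -> gen (Tm v a) -> gen (Tm (g *m v) a).
Proof.
move=> hg hT; rewrite (conj_eq (gen_unit hg) (Tm_conj v a (gen_sp hg))).
exact: gen_conj.
Qed.

Local Notation h := (hat_h1 n xi).
Local Notation W := (hat_w F n).
Definition Ym (t : F) : 'M[F]_N := Qm (ev n) (- ev (N.-1)) t.
Definition Dm : 'M[F]_N := hmx n n xi *m hmx n (n.-1) xi^-1.

Lemma Xm_add s t : Xm s *m Xm t = Xm (s + t).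
Proof. apply: Qm_add; rewrite omNr om_ee //; try lia; by bash; rewrite oppr0. Qed.

Lemma Ym_add s t : Ym s *m Ym t = Ym (s + t).
Proof. apply: Qm_add; rewrite omNr om_ee //; try lia; by bash; rewrite oppr0. Qed.

Lemma Xm0 : Xm 0 = 1%:M. Proof. exact: Qm0. Qed.
Lemma Ym0 : Ym 0 = 1%:M. Proof. exact: Qm0. Qed.

Lemma hX t : h *m Xm t = Xm (xi * t) *m h.
Proof.
rewrite Qm_conj; last exact: h_sp.
rewrite mulmxN !h_ev; try lia.
rewrite /lam eqxx.
rewrite (_ : (N.-2 == 0%N) = false); last by apply/negbTE/eqP; lia.
rewrite (_ : (N.-2 == N.-1) = false); last by apply/negbTE/eqP; lia.
by rewrite scale1r Qm_scalel.
Qed.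

Lemma hY t : h *m Ym t = Ym (xi^-1 * t) *m h.
Proof.
rewrite Qm_conj; last exact: h_sp.
rewrite mulmxN !h_ev; try lia.
rewrite /lam eqxx.
rewrite (_ : (n == 0%N) = false); last by apply/negbTE/eqP; lia.
rewrite (_ : (n == N.-1) = false); last by apply/negbTE/eqP; lia.
rewrite (_ : (N.-1 == 0%N) = false); last by apply/negbTE/eqP; lia.
by rewrite scale1r -scalerN Qm_scaler.
Qed.

Lemma WY t : W *m Ym t = Xm t *m W.
Proof.
rewrite Qm_conj; last exact: w_sp.
rewrite mulmxN !w_ev; try lia.
rewrite /wsig /wsgn.
rewrite (_ : (n < n.-1)%N = false); last lia.
rewrite (_ : (n == n.-1) = false); last by apply/negbTE/eqP; lia.
rewrite eqxx scale1r.
rewrite (_ : (N.-1 < n.-1)%N = false); last lia.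
rewrite (_ : (N.-1 == n.-1) = false); last by apply/negbTE/eqP; lia.
rewrite (_ : (N.-1 == n) = false); last by apply/negbTE/eqP; lia.
by rewrite scale1r.
Qed.

Lemma WD : W *m Dm = h *m W.
Proof.
apply: mx_ext => k kN.
rewrite /Dm -!mulmxA hmx_ev // -!scalemxAr hmx_ev // -!scalemxAr w_ev // -scalemxAr.
rewrite hmx_ev ?wsig_lt // -!scalemxAr hmx_ev ?wsig_lt // !scalerA /wsig /wsgn.
congr (_ *: _).
bash; ring.
Qed.

Lemma hmx_evZ k a c i : (i < N)%N ->
  hmx n k a *m (c *: ev i) = (c * (if i == k then a else 1)) *: ev i.
Proof. by move=> iN; rewrite -scalemxAr hmx_ev // scalerA. Qed.

Lemma Dh : Dm *m h = h *m Dm.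
Proof.
apply: mx_ext => k kN.
rewrite /Dm /hat_h1 -!mulmxA !hmx_ev // !hmx_evZ //.
congr (_ *: _); ring.
Qed.

Definition am : 'M[F]_N := hat_x12_1 F n *m W.

Lemma gen_h : gen h. Proof. by apply: gen_base; left. Qed.
Lemma gen_a : gen am. Proof. by apply: gen_base; right. Qed.

Lemma aDY : am *m (Dm *m Ym (1 - xi^-1)) = h *m am.
Proof.
set u := 1 - xi^-1.
have E1 : W *m (Dm *m Ym u) = h *m (Xm u *m W) by rewrite mulmxA WD -mulmxA WY.
rewrite /am x12_Xm -(mulmxA (Xm 1)) E1.
rewrite (mulmxA h (Xm u) W) hX.
rewrite [RHS](mulmxA h (Xm 1) W) hX.
rewrite -(mulmxA (Xm (xi * u)) h W) (mulmxA (Xm 1)) Xm_add.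
rewrite -(mulmxA (Xm (xi * 1)) h W).
by have -> : 1 + xi * u = xi * 1 by rewrite mulr1 /u mulrDr mulr1 mulrN mulfV // addrC subrK.
Qed.

Lemma gen_Yr : gen (Ym (xi^-1 * (1 - xi^-1) - (1 - xi^-1))).
Proof.
set u := 1 - xi^-1.
have ua := gen_unit gen_a.
have uh := gen_unit gen_h.
have c1E : invmx am *m h *m am = Dm *m Ym u.
  by rewrite -(mulmxA (invmx am) h am) -aDY (mulmxA (invmx am) am) mulVmx // mul1mx.
have gc1 : gen (Dm *m Ym u).
  rewrite -c1E; have := gen_conj (gen_inv gen_a) gen_h; by rewrite invmxK.
have c2E : h *m (Dm *m Ym u) *m invmx h = Dm *m Ym (xi^-1 * u).
  rewrite (mulmxA h Dm (Ym u)) -Dh -(mulmxA Dm h (Ym u)) hY.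
  by rewrite (mulmxA Dm _ h) -(mulmxA (Dm *m _) h) mulmxV // mulmx1.
have gc2 : gen (Dm *m Ym (xi^-1 * u)) by rewrite -c2E; exact: gen_conj gen_h gc1.
have E : (Dm *m Ym u) *m Ym (xi^-1 * u - u) = Dm *m Ym (xi^-1 * u).
  by rewrite -mulmxA Ym_add addrC subrK.
have : gen (invmx (Dm *m Ym u) *m (Dm *m Ym (xi^-1 * u))) by apply: gen_mul => //; apply: gen_inv.
by rewrite -E mulmxA mulVmx ?mul1mx //; apply: gen_unit.
Qed.

Lemma gen_Yxi t : gen (Ym t) -> gen (Ym (xi * t)).
Proof.
move=> hy.
have E : invmx h *m Ym t *m invmx (invmx h) = Ym (xi * t).
  have E2 : h *m Ym (xi * t) = Ym t *m h by rewrite hY mulrA mulVf // mul1r.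
  rewrite invmxK -(mulmxA (invmx h)) -E2 (mulmxA (invmx h)) mulVmx ?mul1mx //.
  exact: gen_unit gen_h.
by rewrite -E; apply: gen_conj => //; apply: gen_inv; exact: gen_h.
Qed.

Lemma gen_Y t : gen (Ym t).
Proof.
set r := xi^-1 * (1 - xi^-1) - (1 - xi^-1).
have r0 : r != 0.
  rewrite /r -[X in _ - X]mul1r -mulrBl mulf_eq0 negb_or subr_eq0 subr_eq0.
  by rewrite [1 == xi^-1]eq_sym invr_eq1 xi1.
have [->|t0] := eqVneq t 0; first by rewrite Ym0; exact: gen_one.
have [k Ek] : exists k, t / r = xi ^+ k by apply: xigen; rewrite mulf_eq0 negb_or t0 invr_eq0 r0.
have -> : t = xi ^+ k * r by rewrite -Ek mulfVK.
elim: k {Ek} => [|k IH]; first by rewrite mul1r; exact: gen_Yr.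
by rewrite exprS -mulrA; apply: gen_Yxi.
Qed.

Lemma gen_X t : gen (Xm t).
Proof.
have E : am *m Ym t = Xm t *m am.
  by rewrite /am x12_Xm -mulmxA WY !mulmxA !Xm_add addrC.
rewrite (conj_eq (gen_unit gen_a) E); apply: gen_conj; [exact: gen_a|exact: gen_Y].
Qed.

Lemma gen_W : gen W.
Proof.
have -> : W = Xm (-1) *m am by rewrite /am x12_Xm mulmxA Xm_add addNr Xm0 mul1mx.
by apply: gen_mul; [exact: gen_X|exact: gen_a].
Qed.


Lemma gen_wp k : gen (wp k).
Proof.
elim: k => [|k IH]; first exact: gen_one.
by rewrite wpS; apply: gen_mul => //; exact: gen_W.
Qed.

Lemma gen_R j t : (j <= n.-2)%N -> gen (Qm (ev j) (- ev (N.-2 - j)) t).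
Proof.
move=> jn; have := gen_Qconj (gen_wp j) (gen_X t).
by rewrite mulmxN wp_e0 ?wp_eN2 //; lia.
Qed.

Lemma gen_Z t : gen (Qm (ev 0) (ev n.-1) t).
Proof.
have := gen_Qconj (gen_wp n.-1) (gen_X (-t)).
rewrite mulmxN wp_e0 // wp_last.
by rewrite Qm_sym -scaleN1r Qm_scalel mulN1r opprK.
Qed.

Lemma gen_C j t : (1 <= j <= n.-1)%N -> gen (Qm (ev 0) (ev (N.-1 - j)) t).
Proof.
elim: j t => [|j IH] t hj; first lia.
case: (posnP j) => [j0|jpos].
  subst j; have -> : (N.-1 - 1 = N.-2)%N by lia.
  have := gen_X (-t); by rewrite /Xm -scaleN1r Qm_scaler mulN1r opprK.
have jn : (j <= n.-2)%N by lia.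
set g := Qm (ev j) (- ev (N.-2 - j)) 1.
have g0 : g *m ev 0 = ev 0.
  rewrite /g Qm_act omNl !om_ee; try lia.
  apply/matrixP => a b; rewrite !mxE; move: (nat_of_ord a) => aa; bash; ring.
have g1 : g *m ev (N.-1 - j) = ev (N.-1 - j) + (- ev (N.-2 - j)).
  rewrite /g Qm_act omNl !om_ee; try lia.
  apply/matrixP => a b; rewrite !mxE; move: (nat_of_ord a) => aa; bash; ring.
have := gen_Qconj (gen_R 1 jn) (IH (- t) (ltac:(lia))).
rewrite -/g g0 g1 Qm_addw; first last.
- rewrite omNr om_ee; try lia; by bash; rewrite oppr0.
- rewrite omNr om_ee; try lia; by bash; rewrite oppr0.
- rewrite om_ee; try lia; by bash.
move=> H.
have : gen (invmx (Qm (ev 0) (ev (N.-1 - j)) (- t)) *m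
  (Qm (ev 0) (ev (N.-1 - j)) (- t) *m Qm (ev 0) (- ev (N.-2 - j)) (- t))).
  by apply: gen_mul => //; apply: gen_inv; apply: IH; lia.
rewrite mulmxA mulVmx; last by apply: gen_unit; apply: IH; lia.
rewrite mul1mx -scaleN1r Qm_scaler mulN1r opprK.
by have -> : (N.-1 - j.+1 = N.-2 - j)%N by lia.
Qed.

Lemma gen_T0 c : gen (Tm (ev 0) c).
Proof.
have h1 : om (ev 0) (ev n) = 0 by rewrite om_ee; try lia; bash.
have h2 : om (ev 0) (ev n.-1) = 0 by rewrite om_ee; try lia; bash.
have E := Qm_comm 1 (- (c / 2)) h1 h2.
have -> : c = 2 * 1 * - (c / 2) * om (ev n) (ev n.-1).
  rewrite om_ee; try lia.
  rewrite (_ : (n + n.-1 == N.-1)%N); last by apply/eqP; lia.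
  by rewrite ltnn mulr1 mulrN1 mulrN opprK mulrC mulfVK.
rewrite E.
have hC : forall s, gen (Qm (ev 0) (ev n) s).
  move=> s; have hj : (1 <= n.-1 <= n.-1)%N by lia.
  have E2 : (N.-1 - n.-1 = n)%N by lia.
  by have := gen_C s hj; rewrite E2.
by repeat apply: gen_mul => //; apply: gen_Z.
Qed.

Lemma gen_Tev k c : (k < N)%N -> gen (Tm (ev k) c).
Proof.
move=> kN; case: (leqP k n.-1) => kn.
  by have := gen_Tconj (gen_wp k) (gen_T0 c); rewrite wp_e0.
have := gen_Tconj (gen_wp (n + (N.-1 - k))) (gen_T0 c).
rewrite wp_hi; last lia.
by rewrite Tm_neg (_ : (N.-1 - (N.-1 - k) = k)%N) //; lia.
Qed.


Definition G x := forall c, gen (Tm x c).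
Definition xc (x : 'cV[F]_N) (k : nat) : F := x (io k) 0.

Lemma xcD x y k : xc (x + y) k = xc x k + xc y k. Proof. by rewrite /xc mxE. Qed.
Lemma xcZ a x k : xc (a *: x) k = a * xc x k. Proof. by rewrite /xc mxE. Qed.
Lemma xcN x k : xc (- x) k = - xc x k. Proof. by rewrite /xc mxE. Qed.
Lemma xc_ev l k : (k < N)%N -> xc (ev l) k = (k == l)%:R.
Proof. by move=> kN; rewrite /xc ev_entry ioK. Qed.
Lemma vec_ext (x y : 'cV[F]_N) : (forall k, (k < N)%N -> xc x k = xc y k) -> x = y.
Proof.
move=> H; apply/matrixP => i j; rewrite (ord1 j).
by have := H i (ltn_ord i); rewrite /xc io_val.
Qed.
Lemma evomx x k : (k < N)%N -> om (ev k) x = - sg k * xc x (N.-1 - k).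
Proof. exact: evom. Qed.

Definition xcE := (xcD, xcZ, xcN).

Lemma G_conj g x : gen g -> G (g *m x) -> G x.
Proof.
move=> hg H c; have := gen_Tconj (gen_inv hg) (H c).
by rewrite mulmxA mulVmx ?mul1mx //; exact: gen_unit.
Qed.

Lemma sg0 : sg 0 = -1. Proof. by rewrite /sg; case: ifP => //; lia. Qed.
Lemma sg_lo k : (k < n)%N -> sg k = -1. Proof. by rewrite /sg; case: ifP => //; lia. Qed.
Lemma sg_hi k : (n <= k)%N -> sg k = 1. Proof. by rewrite /sg => ->. Qed.

Lemma elim_base x : xc x N.-1 = 1 ->
  (forall i, (1 <= i < n)%N -> xc x i = 0 /\ xc x (N.-1 - i) = 0) -> G x.
Proof.
move=> xL H.
apply: (G_conj (gen_Tev (- xc x 0) (_ : (0 < N)%N))); first lia.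
have -> : Tm (ev 0) (- xc x 0) *m x = ev N.-1.
  apply: vec_ext => k kN.
  rewrite Tm_act evomx; last lia.
  rewrite sg0 subn0 xL !xcE !xc_ev //.
  have [->|k0] := eqVneq k 0%N.
    rewrite (_ : (0 == N.-1)%N = false); last by apply/negbTE/eqP; lia.
    rewrite /=; ring.
  rewrite mulr0 addr0.
  have [->|kL] := eqVneq k N.-1; first by rewrite xL.
  case: (ltnP k n) => kn.
    by case: (H k (ltac:(lia))).
  have := H (N.-1 - k)%N (ltac:(lia)) => [[_]].
  by rewrite (_ : (N.-1 - (N.-1 - k) = k)%N) //; lia.
by move=> c; apply: gen_Tev; lia.
Qed.

Lemma elim_step j : (1 <= j < n)%N ->
  (forall y, xc y N.-1 = 1 ->
    (forall i, (j <= i < n)%N -> xc y i = 0 /\ xc y (N.-1 - i) = 0) -> G y) ->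
  forall x, xc x N.-1 = 1 ->
    (forall i, (j < i < n)%N -> xc x i = 0 /\ xc x (N.-1 - i) = 0) -> G x.
Proof.
move=> hj IH x xL H.
have jN : (j < N)%N by lia.
have j'N : (N.-1 - j < N)%N by lia.
have LN : (N.-1 < N)%N by lia.
have hCj : forall t, gen (Qm (ev 0) (ev (N.-1 - j)) t) by move=> t; apply: gen_C; lia.
set p := xc x j; set r := xc x (N.-1 - j).
set y1 := Qm (ev 0) (ev (N.-1 - j)) (1 - r) *m x.
have e1 : forall i, (i < N)%N -> xc y1 i =
    xc x i + ((1 - r) * - p) * (i == 0%N)%:R + (1 - r) * (i == (N.-1 - j)%N)%:R.
  move=> i iN; rewrite /y1 Qm_act !evomx; try lia.
  rewrite sg0 sg_hi; last lia.
  rewrite subn0 xL (_ : (N.-1 - (N.-1 - j) = j)%N); last lia.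
  rewrite !xcE !xc_ev //; rewrite -/p; ring.
set y2 := Tm (ev j) (- p) *m y1.
have e2 : forall i, (i < N)%N -> xc y2 i = xc y1 i - p * (i == j)%:R.
  move=> i iN; rewrite /y2 Tm_act evomx // sg_lo; last lia.
  rewrite !xcE xc_ev // (e1 (N.-1 - j)%N) //.
  rewrite (_ : (N.-1 - j == 0%N)%N = false); last by apply/negbTE/eqP; lia.
  rewrite eqxx -/r /=; ring.
set y3 := Qm (ev 0) (ev (N.-1 - j)) (-1) *m y2.
have e3 : forall i, (i < N)%N -> xc y3 i = xc y2 i - (i == (N.-1 - j)%N)%:R.
  move=> i iN; rewrite /y3 Qm_act !evomx; try lia.
  rewrite sg0 sg_hi; last lia.
  rewrite subn0 (_ : (N.-1 - (N.-1 - j) = j)%N); last lia.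
  rewrite !xcE !xc_ev // (e2 j jN) (e2 N.-1 LN) (e1 j jN) (e1 N.-1 LN) xL eqxx.
  rewrite (_ : (j == 0%N)%N = false); last by apply/negbTE/eqP; lia.
  rewrite (_ : (j == N.-1 - j)%N = false); last by apply/negbTE/eqP; lia.
  rewrite (_ : (N.-1 == 0%N)%N = false); last by apply/negbTE/eqP; lia.
  rewrite (_ : (N.-1 == N.-1 - j)%N = false); last by apply/negbTE/eqP; lia.
  rewrite (_ : (N.-1 == j)%N = false); last by apply/negbTE/eqP; lia.
  rewrite -/p /=; ring.
apply: (G_conj (hCj (1 - r))); rewrite -/y1.
apply: (G_conj (gen_Tev (- p) jN)); rewrite -/y2.
apply: (G_conj (hCj (-1))); rewrite -/y3.
apply: IH.
  rewrite e3 ?e2 ?e1; try lia.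
  rewrite xL.
  rewrite (_ : (N.-1 == 0%N)%N = false); last by apply/negbTE/eqP; lia.
  rewrite (_ : (N.-1 == N.-1 - j)%N = false); last by apply/negbTE/eqP; lia.
  rewrite (_ : (N.-1 == j)%N = false); last by apply/negbTE/eqP; lia.
  rewrite /=; ring.
move=> i hi.
rewrite !e3 ?e2 ?e1; try lia.
have [ij|ij] := eqVneq i j.
  subst i; rewrite eqxx -/p.
  rewrite (_ : (j == 0%N)%N = false); last by apply/negbTE/eqP; lia.
  rewrite (_ : (j == N.-1 - j)%N = false); last by apply/negbTE/eqP; lia.
  rewrite (_ : (N.-1 - j == 0%N)%N = false); last by apply/negbTE/eqP; lia.
  rewrite (_ : (N.-1 - j == j)%N = false); last by apply/negbTE/eqP; lia.
  rewrite -/r; split; rewrite /=; ring.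
have [] := H i (ltac:(lia)) => -> ->.
rewrite (_ : (i == 0%N)%N = false); last by apply/negbTE/eqP; lia.
rewrite (_ : (i == N.-1 - j)%N = false); last by apply/negbTE/eqP; lia.
rewrite (_ : (N.-1 - i == 0%N)%N = false); last by apply/negbTE/eqP; lia.
rewrite (_ : (N.-1 - i == N.-1 - j)%N = false); last by apply/negbTE/eqP; lia.
rewrite (_ : (N.-1 - i == j)%N = false); last by apply/negbTE/eqP; lia.
split; rewrite /=; ring.
Qed.

Lemma elim_L x : xc x N.-1 = 1 -> G x.
Proof.
have : forall j, (1 <= j <= n)%N -> forall x, xc x N.-1 = 1 ->
    (forall i, (j <= i < n)%N -> xc x i = 0 /\ xc x (N.-1 - i) = 0) -> G x.
  elim=> [|j IH] hj; first lia.
  move=> y yL Hy.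
  case: (posnP j) => [j0|jp].
    by subst j; apply: elim_base => // i hi; apply: Hy.
  have hj1 : (1 <= j < n)%N by lia.
  have hj2 : (1 <= j <= n)%N by lia.
  apply: (elim_step hj1 (IH hj2) yL).
  by move=> i hi; apply: Hy; lia.
move=> /(_ n (ltac:(lia)) x) H xL; apply: H => // i; lia.
Qed.

Lemma Tm0v c : Tm 0 c = 1%:M.
Proof. by rewrite /Tm mul0mx scaler0 addr0. Qed.

Lemma G_all x : G x.
Proof.
have A : forall y, xc y 0 != 0 -> G y.
  move=> y y0.
  set c := (1 - xc y N.-1) / - xc y 0.
  apply: (G_conj (gen_Tev c (_ : (N.-1 < N)%N))); first lia.
  apply: elim_L; rewrite Tm_act evomx; last lia.
  rewrite sg_hi; last lia.
  rewrite (_ : (N.-1 - N.-1 = 0)%N); last lia.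
  rewrite !xcE xc_ev; last lia.
  by rewrite eqxx /= /c; field; rewrite oppr_eq0.
have B : forall y, xc y N.-1 != 0 -> G y.
  move=> y yL.
  set c := (1 - xc y 0) / xc y N.-1.
  apply: (G_conj (gen_Tev c (_ : (0 < N)%N))); first lia.
  apply: A; rewrite Tm_act evomx; last lia.
  rewrite sg0 subn0 !xcE xc_ev; last lia.
  rewrite eqxx /=.
  match goal with |- is_true (~~ (?e == 0)) => have -> : e = 1 by rewrite /c; field end.
  exact: oner_neq0.
have C : forall y l, (1 <= l < n)%N -> xc y l != 0 -> G y.
  move=> y l hl yl.
  set t := (xc y 0 - 1) / xc y l.
  apply: (G_conj (gen_C t (_ : (1 <= l <= n.-1)%N))); first lia.
  apply: A; rewrite Qm_act !evomx; try lia.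
  rewrite sg0 sg_hi; last lia.
  rewrite subn0 (_ : (N.-1 - (N.-1 - l) = l)%N); last lia.
  rewrite !xcE !xc_ev; try lia.
  rewrite eqxx (_ : (0 == N.-1 - l)%N = false); last by apply/negbTE/eqP; lia.
  rewrite /=.
  match goal with |- is_true (~~ (?e == 0)) => have -> : e = 1 by rewrite /t; field end.
  exact: oner_neq0.
have D : forall y l, (1 <= l < n)%N -> xc y (N.-1 - l) != 0 -> G y.
  move=> y l hl yl.
  set c := (1 - xc y l) / xc y (N.-1 - l).
  apply: (G_conj (gen_Tev c (_ : (l < N)%N))); first lia.
  apply: (C _ l hl); rewrite Tm_act evomx; last lia.
  rewrite sg_lo; last lia.
  rewrite !xcE xc_ev; last lia.
  rewrite eqxx /=.
  match goal with |- is_true (~~ (?e == 0)) => have -> : e = 1 by rewrite /c; field end.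
  exact: oner_neq0.
have [->|x0] := eqVneq x 0.
  by move=> c; rewrite Tm0v; exact: gen_one.
have : [exists k : 'I_N, xc x k != 0].
  case: existsP => // H0; exfalso; move/eqP: x0; apply.
  apply: vec_ext => k kN; rewrite [xc 0 k]/xc mxE; apply/eqP/negPn/negP => nz.
  by apply: H0; exists (Ordinal kN).
case/existsP => k xk; have kN := ltn_ord k.
move: (nat_of_ord k) kN xk => kk kN xk.
have [k0|k0] := eqVneq kk 0%N; first by apply: A; rewrite -k0.
have [kL|kL] := eqVneq kk N.-1; first by apply: B; rewrite -kL.
case: (ltnP kk n) => kn; first by apply: (C _ kk) => //; lia.
apply: (D _ (N.-1 - kk)%N); first lia.
by rewrite (_ : (N.-1 - (N.-1 - kk) = kk)%N) //; lia.
Qed.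


Definition fixd k (X : 'M[F]_N) := forall i, (i < k)%N ->
  X *m ev i = ev i /\ X *m ev (N.-1 - i) = ev (N.-1 - i).
Definition inW k (v : 'cV[F]_N) := forall i, (i < k)%N ->
  om v (ev i) = 0 /\ om v (ev (N.-1 - i)) = 0.
Definition Good k g := gen g /\ fixd k g.

Lemma inW_add k u v : inW k u -> inW k v -> inW k (u + v).
Proof.
move=> hu hv i ik; case: (hu i ik) => a b; case: (hv i ik) => c d.
by rewrite !omDl a b c d addr0.
Qed.
Lemma inW_opp k u : inW k u -> inW k (- u).
Proof. by move=> hu i ik; case: (hu i ik) => a b; rewrite !omNl a b oppr0. Qed.
Lemma inW_sub k u v : inW k u -> inW k v -> inW k (u - v).
Proof. by move=> hu hv; apply: inW_add => //; apply: inW_opp. Qed.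

Lemma Good_T k v a : inW k v -> Good k (Tm v a).
Proof.
move=> hv; split; first exact: G_all.
move=> i ik; case: (hv i ik) => e1 e2.
rewrite !Tm_act.
have e1' : om v (ev i) = 0 := e1.
by rewrite e1 e2 !mulr0 !scale0r !addr0.
Qed.

Lemma Good_mul k g1 g2 : Good k g1 -> Good k g2 -> Good k (g1 *m g2).
Proof.
move=> [h1 f1] [h2 f2]; split; first exact: gen_mul.
move=> i ik; case: (f1 i ik) => a b; case: (f2 i ik) => c d.
by rewrite -!mulmxA c d a b.
Qed.

Lemma Good_W k g v : Good k g -> inW k v -> inW k (g *m v).
Proof.
move=> [hg fg] hv i ik; case: (fg i ik) => a b.
rewrite -{1}a -{1}b !(sp_om _ _ (gen_sp hg)); exact: hv.
Qed.

Lemma sg_nz k : sg k != 0.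
Proof. by rewrite /sg; case: ifP => _; rewrite ?oppr_eq0 oner_eq0. Qed.

Lemma nz_entry (u : 'cV[F]_N) : u != 0 -> exists2 l, (l < N)%N & xc u l != 0.
Proof.
move=> u0.
have : [exists k : 'I_N, xc u k != 0].
  case: existsP => // H0; exfalso; move/eqP: u0; apply.
  apply: vec_ext => k kN; rewrite [xc 0 k]/xc mxE; apply/eqP/negPn/negP => nz.
  by apply: H0; exists (Ordinal kN).
by case/existsP => k xk; exists k.
Qed.

Lemma omevx x k : (k < N)%N -> om x (ev k) = sg k * xc x (N.-1 - k).
Proof. exact: omev. Qed.

Lemma nondeg k u : (k <= n)%N -> inW k u -> u != 0 ->
  exists z, inW k z /\ om u z != 0.
Proof.
move=> kn hu u0; have [l lN ul] := nz_entry u0.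
exists (ev (N.-1 - l)); split; last first.
  rewrite omevx; last lia.
  by rewrite (_ : (N.-1 - (N.-1 - l) = l)%N) ?mulf_neq0 ?sg_nz //; lia.
move=> i ik; split.
  rewrite om_ee; try lia.
  case: ifP => // /eqP E; exfalso.
  have li : l = i by lia.
  case: (hu i ik) => _ /eqP; rewrite omevx; last lia.
  rewrite (_ : (N.-1 - (N.-1 - i) = i)%N); last lia.
  by rewrite mulf_eq0 (negbTE (sg_nz _)) -li (negbTE ul).
rewrite om_ee; try lia.
case: ifP => // /eqP E; exfalso.
have li : l = (N.-1 - i)%N by lia.
case: (hu i ik) => /eqP; rewrite omevx; last lia.
by rewrite mulf_eq0 (negbTE (sg_nz _)) -li (negbTE ul).
Qed.

Lemma Tm_move u w : om w u != 0 -> Tm (w - u) (om w u)^-1 *m u = w.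
Proof.
move=> wu; rewrite Tm_act omDl omNl om_self subr0 mulVf //.
by rewrite scale1r addrC subrK.
Qed.

Lemma Tm_fix v a x : om v x = 0 -> Tm v a *m x = x.
Proof. by move=> e; rewrite Tm_act e mulr0 scale0r addr0. Qed.

Lemma T1 k u w : (k <= n)%N -> inW k u -> inW k w -> u != 0 -> w != 0 ->
  exists g, Good k g /\ g *m u = w.
Proof.
move=> kn hu hw u0 w0.
have step : forall a b, inW k a -> inW k b -> om b a != 0 ->
    exists g, Good k g /\ g *m a = b.
  move=> a b ha hb ba; exists (Tm (b - a) (om b a)^-1); split.
    by apply: Good_T; apply: inW_sub.
  exact: Tm_move.
have [wu|wu] := eqVneq (om w u) 0; last exact: step.
have [z1 [hz1 uz1]] := nondeg kn hu u0.
have [z2 [hz2 wz2]] := nondeg kn hw w0.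
have [z [hz [uz zw]]] : exists z, inW k z /\ om z u != 0 /\ om w z != 0.
  have [e1|e1] := eqVneq (om w z1) 0; last first.
    by exists z1; split => //; split => //; rewrite om_anti oppr_eq0.
  have [e2|e2] := eqVneq (om u z2) 0; last first.
    by exists z2; split => //; split => //; rewrite om_anti oppr_eq0.
  exists (z1 + z2); split; first exact: inW_add.
  split.
    by rewrite omDl (om_anti z1) (om_anti z2) e2 oppr0 addr0 oppr_eq0.
  by rewrite omDr e1 add0r.
have [g1 [G1 E1]] := step u z hu hz uz.
have [g2 [G2 E2]] := step z w hz hw zw.
by exists (g2 *m g1); split; [exact: Good_mul|rewrite -mulmxA E1].
Qed.

Lemma phase2 k w w' u : inW k w -> inW k w' -> inW k u ->
  om w w' = 1 -> om w u = 1 -> exists h, Good k h /\ h *m w = w /\ h *m u = w'.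
Proof.
move=> hw hw' hu ww' wu.
have w'w : om w' w = -1 by rewrite om_anti ww'.
have uw : om u w = -1 by rewrite om_anti wu.
have [e|e] := eqVneq (om w' u) 0; last first.
  exists (Tm (w' - u) (om w' u)^-1); split; first by apply: Good_T; apply: inW_sub.
  split; last exact: Tm_move.
  by apply: Tm_fix; rewrite omDl omNl w'w uw opprK addNr.
set z := u + w.
have e2 : om w' z != 0 by rewrite /z omDr e w'w add0r oppr_eq0 oner_eq0.
have hz : inW k z by apply: inW_add.
exists (Tm (w' - z) (om w' z)^-1 *m Tm w 1); split.
  by apply: Good_mul; apply: Good_T => //; apply: inW_sub.
split.
  rewrite -mulmxA (Tm_fix _ (om_self w)); apply: Tm_fix.
  by rewrite omDl omNl w'w /z omDl uw om_self addr0 opprK addNr.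
rewrite -mulmxA (Tm_act w) wu mulr1 scale1r -/z; exact: Tm_move.
Qed.

Lemma T2 k u u' w w' : (k <= n)%N -> inW k u -> inW k u' -> inW k w -> inW k w' ->
  om u u' = 1 -> om w w' = 1 ->
  exists g, Good k g /\ g *m u = w /\ g *m u' = w'.
Proof.
move=> kn hu hu' hw hw' uu' ww'.
have u0 : u != 0 by apply/eqP => u0; move: uu'; rewrite u0 om0l => /eqP; rewrite eq_sym oner_eq0.
have w0 : w != 0 by apply/eqP => w0; move: ww'; rewrite w0 om0l => /eqP; rewrite eq_sym oner_eq0.
have [g1 [G1 E1]] := T1 kn hu hw u0 w0.
have hu'' : inW k (g1 *m u') by apply: Good_W.
have wu'' : om w (g1 *m u') = 1 by rewrite -E1 (sp_om _ _ (gen_sp G1.1)).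
have [h [H [Hw Hu]]] := phase2 hw hw' hu'' ww' wu''.
exists (h *m g1); split; first exact: Good_mul.
by rewrite -!mulmxA E1 Hw Hu.
Qed.

Lemma sp_gen X : inSp X -> gen X.
Proof.
have main : forall m, (m <= n)%N -> forall X, inSp X -> fixd (n - m) X -> gen X.
  elim=> [|m IH] mn Y hY fY.
    have -> : Y = 1%:M; last exact: gen_one.
    apply: mx_ext => l lN; rewrite mul1mx.
    case: (ltnP l n) => ln; first by case: (fY l (ltac:(lia))).
    have := fY (N.-1 - l)%N (ltac:(lia)) => [[_]].
    by rewrite (_ : (N.-1 - (N.-1 - l) = l)%N) //; lia.
  set k := (n - m.+1)%N.
  have kn : (k < n)%N by lia.
  have kN : (k < N)%N by lia.
  have k'N : (N.-1 - k < N)%N by lia.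
  have Wev : forall l, (l < N)%N -> (k <= l)%N -> (l < N - k)%N -> inW k (ev l).
    move=> l lN kl lk i ik; rewrite !om_ee; try lia.
    split; case: ifP => // /eqP; lia.
  have hu : inW k (Y *m ev k).
    move=> i ik; case: (fY i (ltac:(lia))) => a b.
    rewrite -{1}a -{1}b !(sp_om _ _ hY) !om_ee; try lia.
    split; case: ifP => // /eqP; lia.
  have hu' : inW k (Y *m ev (N.-1 - k)).
    move=> i ik; case: (fY i (ltac:(lia))) => a b.
    rewrite -{1}a -{1}b !(sp_om _ _ hY) !om_ee; try lia.
    split; case: ifP => // /eqP; lia.
  have e1 : om (ev k) (ev (N.-1 - k)) = 1.
    rewrite om_ee; try lia.
    rewrite (_ : (k + (N.-1 - k) == N.-1)%N); last by apply/eqP; lia.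
    by rewrite kn.
  have [g [[Gg fg] [E1 E2]]] := T2 (ltnW kn) hu hu' (Wev k kN (leqnn _) (ltac:(lia)))
    (Wev _ k'N (ltac:(lia)) (ltac:(lia))) (ltac:(by rewrite (sp_om _ _ hY))) e1.
  have gY : gen (g *m Y).
    apply: (IH (ltac:(lia))); first exact: sp_mul (gen_sp Gg) hY.
    move=> i ik.
    have [ik'|ik'] := ltnP i k.
      by case: (fY i (ltac:(lia))) => a b; case: (fg i ik') => c d; rewrite -!mulmxA a b c d.
    have -> : i = k by lia.
    by rewrite -!mulmxA E1 E2.
  have -> : Y = invmx g *m (g *m Y) by rewrite mulmxA mulVmx ?mul1mx //; exact: gen_unit.
  by apply: gen_mul => //; apply: gen_inv.
move=> hX; apply: (main n (leqnn n)) => //.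
by move=> i; rewrite subnn.
Qed.

End Aux.
Lemma two_nz_odd (F : finFieldType) : odd #|F| -> (2 : F) != 0.
Proof.
move=> oF; apply/negP => /eqP t0.
have c2 : 2%N \in [pchar F] by rewrite inE /= t0 eqxx.
have := card_pprimeChar c2.
set k := logn _ _ => E.
move: oF; rewrite E.
case: k E => [|k] E; last by rewrite expnS oddM.
have := finNzRing_gt1 F. rewrite E. done.
Qed.

Lemma prim_facts (F : finFieldType) (xi : F) : odd #|F| -> (#|F|.-1).-primitive_root xi ->
  [/\ xi != 0, xi != 1 & forall c : F, c != 0 -> exists k, c = xi ^+ k].
Proof.
move=> oF pr.
have g1 : (1 < #|F|)%N := finNzRing_gt1 F.
have q2 : (2 < #|F|)%N.
  case: (ltngtP #|F| 2) => //; first by move=> h; exfalso; lia.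
  by move=> E; move: oF; rewrite E.
split.
- apply/negP => /eqP x0; move: (prim_expr_order pr); rewrite x0 expr0n.
  case: (#|F|.-1) (prim_order_gt0 pr) => // m _ /eqP; by rewrite eq_sym oner_eq0.
- apply/negP => /eqP x1; have := prim_order_dvd pr 1%N.
  rewrite x1 expr1 eqxx dvdn1 => /eqP; lia.
- move=> c c0; have : c ^+ #|F|.-1 = 1.
    apply: (mulfI c0); rewrite -exprS prednK ?expf_card ?mulr1 //; lia.
  by case/(prim_rootP pr) => i ->; exists i.
Qed.

Unset Implicit Arguments.

Theorem mainTheorem4 (F : finFieldType) (n : nat) (xi : F) :
  (1 < n)%N -> odd #|F| -> (#|F|.-1).-primitive_root xi ->
  forall X : 'M[F]_(n.*2),
    inSp X <->
    gen_by (fun Y => Y = hat_h1 n xi \/ Y = hat_x12_1 F n *m hat_w F n) X.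
Proof.
move=> n2 oF pr X.
have two := two_nz_odd oF.
have [x0 x1 xg] := prim_facts oF pr.
split=> hX.
- exact: (sp_gen n2 two x0 x1 xg hX).
- exact: (gen_sp n2 two x0 hX).
Qed.
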